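(* Let $T$ take values in $\mathcal{S}\subseteq\mathbb{N}$, $q_t=\mathbb{P}(T=t)$, with $\mathbb{E}[T^\delta]<\infty$ for some $\delta>0$. Fix $\tau\in(0,1)$, a kernel $\kappa:\mathcal{S}^2\to[0,\infty)$, and two vertex types $t,s\in\mathcal{S}$ that are stable at tolerance $\tau$; set $\Lambda_n(t,s)=\lfloor nq_tq_s\kappa(t,s)\rfloor$. Let $\kappa_n'$ be another kernel for which there exist $\alpha\in(1/2-\tau/2,1/2)$ and $C>0$ with $$\kappa_n'(t,s)\ge\kappa(t,s)+\frac{Cn^{-1/2+\alpha}}{\sqrt{q_tq_s}},$$ and let $A_n$ be the arc-to-vertex-type function of $\texttt{IRD}_n(T,\kappa_n')$. Then for all sufficiently large $n$, $\mathbb{P}(A_n(t,s)<\Lambda_n(t,s))\le2\exp(-\log(n)^2/2)$.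
   Context: $\texttt{IRD}_n(T,\kappa_n')$: vertex set $[n]$, types $T_v$ i.i.d. as $T$, each arc $(v,w)$, $v\ne w$, present independently with probability $\min\{\kappa_n'(T_v,T_w)/n,1\}$. Arc-to-vertex-type function: $A_n(t,s)=|\{(v,w)\text{ arc}:T_v=t,T_w=s\}|$. Stability: $u_n^\uparrow(\tau)=\inf\{t:q_s<n^{-1+\tau}\ \forall s\ge t\}$; type $t$ is stable at tolerance $\tau$ if $t<u_n^\uparrow(\tau)$. *)

(* Defs.v *)
From HB Require Import structures.
From mathcomp Require Import all_boot all_order all_algebra.
From mathcomp Require Import all_classical all_reals all_analysis.
Set Implicit Arguments. Unset Strict Implicit. Unset Printing Implicit Defensive.
Import Order.TTheory GRing.Theory Num.Theory.
Local Open Scope classical_set_scope.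
Local Open Scope ring_scope.

Section IRD.
Variable R : realType.

Definition arc_prob (kn : nat -> nat -> R) (n : nat) (a b : nat) : R :=
  Num.min (kn a b / n%:R) 1.

Definition offdiag (n : nat) : {set 'I_n * 'I_n} := [set e | e.1 != e.2].

(* Conditional probability of arc set E given the type vector x. *)
Definition graph_weight (kn : nat -> nat -> R) (n : nat)
    (x : {ffun 'I_n -> nat}) (E : {set 'I_n * 'I_n}) : R :=
  if E \subset offdiag n then
    \prod_(e in offdiag n)
      (if e \in E then arc_prob kn n (x e.1) (x e.2)
       else 1 - arc_prob kn n (x e.1) (x e.2))
  else 0.

(* Probability that IRD_n(T, kn) (types i.i.d. with law q) satisfies P. *)
Definition IRD_prob (q : nat -> R) (kn : nat -> nat -> R) (n : nat)
    (P : {ffun 'I_n -> nat} -> {set 'I_n * 'I_n} -> bool) : \bar R :=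
  \esum_(x in [set: {ffun 'I_n -> nat}])
    ((\prod_(v < n) q (x v)) *
     \sum_(E : {set 'I_n * 'I_n} | P x E) @graph_weight kn n x E)%:E.

Definition arc_count (n : nat) (x : {ffun 'I_n -> nat})
    (E : {set 'I_n * 'I_n}) (t s : nat) : nat :=
  #|[set e in E | (x e.1 == t) && (x e.2 == s)]|.

(* t < u_n^up(tau) = inf {u | forall s >= u, q_s < n^(-1+tau)} *)
Definition stable (q : nat -> R) (tau : R) (n t : nat) : Prop :=
  forall u : nat, (forall s : nat, (u <= s)%N -> q s < n%:R `^ (tau - 1)) ->
    (t < u)%N.

End IRD.

(* Main.v *)
Require Import Defs.
From HB Require Import structures.
From mathcomp Require Import all_boot all_order all_algebra.
From mathcomp Require Import all_classical all_reals all_analysis.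
From mathcomp Require Import ring lra zify.
Import Order.TTheory GRing.Theory Num.Theory.
Local Open Scope classical_set_scope.
Local Open Scope ring_scope.
Section Helpers.
Variable R : realType.

Lemma graph_sum (T : finType) (D : {set T}) (u v : T -> R) :
  \sum_(E : {set T}) (if E \subset D then \prod_(e in D) (if e \in E then u e else v e) else 0)
  = \prod_(e in D) (u e + v e).
Proof.
pose F (e : T) (b : bool) : R :=
  if e \in D then (if b then u e else v e) else (if b then 0 else 1).
have -> : \prod_(e in D) (u e + v e) = \prod_(e : T) \sum_(b : bool) F e b.
  rewrite big_mkcond /=; apply: eq_bigr => e _.
  by rewrite big_bool /F; case: (e \in D) => //=; rewrite add0r.
rewrite bigA_distr_bigA /=.
rewrite (reindex (fun E : {set T} => [ffun e => e \in E])) /=; last first.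
  exists (fun f : {ffun T -> bool} => [set e | f e]%SET) => [E _|f _].
    by apply/setP => e; rewrite !(inE, ffunE).
  by apply/ffunP => e; rewrite !(inE, ffunE).
apply: eq_bigr => E _.
rewrite [RHS](eq_bigr (fun i => F i (i \in E))); last by move=> i _; rewrite ffunE.
symmetry.
case: ifP => [sED|/negbT].
  rewrite [RHS]big_mkcond /=; apply: eq_bigr => e _.
  rewrite /F; case: ifP => // eD.
  have -> : (e \in E) = false by apply/negbTE; apply: contraFN eD => /(fintype.subsetP sED).
  by [].
case/subsetPn => e eE eD.
rewrite (bigD1 e) //= /F (negbTE eD) eE mul0r //.
Qed.

End Helpers.
Section Helpers2.
Variable R : realType.

Lemma arc_prob01 (kn : nat -> nat -> R) n a b : (forall a b, 0 <= kn a b) ->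
  0 <= arc_prob kn n a b <= 1.
Proof.
move=> k0; rewrite /arc_prob; apply/andP; split.
  by rewrite le_min ler01 andbT divr_ge0.
by rewrite ge_min lexx orbT.
Qed.

Lemma graph_weight_ge0 (kn : nat -> nat -> R) n (x : {ffun 'I_n -> nat}) E : (forall a b, 0 <= kn a b) ->
  0 <= graph_weight kn x E.
Proof.
move=> k0; rewrite /graph_weight; case: ifP => // _.
apply: prodr_ge0 => e _; have /andP[h0 h1] := arc_prob01 kn n (x e.1) (x e.2) k0.
by case: ifP => _; rewrite ?subr_ge0.
Qed.

Definition mtch n (x : {ffun 'I_n -> nat}) (t s : nat) (e : 'I_n * 'I_n) :=
  (x e.1 == t) && (x e.2 == s).

Lemma edge_bound (kn : nat -> nat -> R) n (x : {ffun 'I_n -> nat}) t s (lam Lr : R)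
    (P : pred {set 'I_n * 'I_n}) :
  (forall a b, 0 <= kn a b) -> 0 <= lam ->
  (forall E, P E -> (arc_count x E t s)%:R < Lr) ->
  \sum_(E | P E) graph_weight kn x E <=
  expR (lam * Lr) * (1 - arc_prob kn n t s + arc_prob kn n t s * expR (- lam))
     ^+ #|[set e in offdiag n | @mtch n x t s e]%SET|.
Proof.
move=> k0 l0 PA.
set D := offdiag n.
pose pe (e : 'I_n * 'I_n) := arc_prob kn n (x e.1) (x e.2).
pose ce (e : 'I_n * 'I_n) := if @mtch n x t s e then expR (- lam) else 1.
pose G (E : {set 'I_n * 'I_n}) := if E \subset D then
   \prod_(e in D) (if e \in E then pe e * ce e else 1 - pe e) else 0.
have G0 E : 0 <= G E.
  rewrite /G; case: ifP => // _; apply: prodr_ge0 => e _.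
  have /andP[h0 h1] := arc_prob01 kn n (x e.1) (x e.2) k0.
  by case: ifP => _; rewrite ?subr_ge0 // mulr_ge0 // /ce; case: ifP => // _; rewrite expR_ge0.
apply: (@le_trans _ _ (\sum_(E | P E) expR (lam * Lr) * G E)).
  apply: ler_sum => E PE.
  rewrite /graph_weight /G; case: ifP => sED; last by rewrite mulr0.
  have -> : \prod_(e in D) (if e \in E then pe e * ce e else 1 - pe e) =
     \prod_(e in D) (if e \in E then pe e else 1 - pe e) *
     \prod_(e in D) (if e \in E then ce e else 1).
    by rewrite -big_split /=; apply: eq_bigr => e _; case: ifP => _; rewrite ?mulr1.
  rewrite mulrCA.
  have -> : \prod_(e in D) (if e \in E then ce e else 1) =
            expR (- lam) ^+ (arc_count x E t s).
    rewrite /arc_count -prodr_const big_mkcond [RHS]big_mkcond /=.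
    apply: eq_bigr => e _; rewrite !inE /ce /mtch.
    case eE: (e \in E) => /=.
      by have := fintype.subsetP sED e eE; rewrite inE => ->.
    by case: (_ != _).
  rewrite -expRM_natr -expRD.
  have W0 : 0 <= \prod_(e in D) (if e \in E then pe e else 1 - pe e).
    apply: prodr_ge0 => e _; have /andP[h0 h1] := arc_prob01 kn n (x e.1) (x e.2) k0.
    by case: ifP => _; rewrite ?subr_ge0.
  rewrite -[X in X <= _]mulr1; apply: ler_wpM2l => //.
  rewrite -[X in X <= _]expR0 ler_expR mulNr -mulrBr; apply: mulr_ge0 => //.
  by rewrite subr_ge0 ltW // PA.
apply: (@le_trans _ _ (\sum_E expR (lam * Lr) * G E)).
  by rewrite [X in _ <= X](bigID P) /= lerDl; apply: sumr_ge0 => E _; rewrite mulr_ge0 // expR_ge0.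
rewrite -mulr_sumr /G graph_sum; apply: ler_wpM2l; first exact: expR_ge0.
rewrite -prodr_const [X in X <= _]big_mkcond [X in _ <= X]big_mkcond /=.
apply: ler_prod => e _; rewrite /ce /pe.
rewrite (_ : (e \in [set e in D | mtch n x t s e]%SET) = (e \in D) && mtch n x t s e); last by rewrite inE.
case: (e \in D) => /=; last by rewrite lexx ler01.
case: ifP => m; last by rewrite mulr1 subrKC lexx ler01.
move: m; rewrite /mtch => /andP[/eqP -> /eqP ->].
have /andP[h0 h1] := arc_prob01 kn n t s k0.
by rewrite addrC lexx andbT addr_ge0 ?subr_ge0 // mulr_ge0 // expR_ge0.
Qed.

End Helpers2.
Section Helpers3.
Variable R : realType.

Definition Ncnt n (x : {ffun 'I_n -> nat}) (t : nat) := #|[set v | x v == t]%SET|.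
Arguments Ncnt {n}.
Arguments mtch {n}.

Lemma M_lb n (x : {ffun 'I_n -> nat}) t s :
  (Ncnt x t * Ncnt x s <= #|[set e in offdiag n | @mtch n x t s e]%SET| + Ncnt x t)%N.
Proof.
rewrite /Ncnt -cardsX.
set U := [set v | x v == t]%SET.
apply: (leq_trans _ (leq_trans (leq_card_setU _ _) _)).
  apply: (@subset_leq_card _ _ ([set e in offdiag n | mtch x t s e] :|: [set (v, v) | v in U])%SET).
  apply/fintype.subsetP => -[v w]; rewrite !inE /= /mtch /= => /andP[xv xw].
  case: (eqVneq v w) => [<-|vw]; last by rewrite xv xw.
  by apply/orP; right; apply/imsetP; exists v => //; rewrite inE.
by rewrite leq_add2l leq_imset_card.
Qed.

Lemma gsum_le1 (kn : nat -> nat -> R) n (x : {ffun 'I_n -> nat}) (P : pred {set 'I_n * 'I_n}) :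
  (forall a b, 0 <= kn a b) ->
  \sum_(E | P E) graph_weight kn x E <= 1.
Proof.
move=> k0.
apply: (le_trans (@edge_bound R kn n x 0 0 0 (#|{: 'I_n * 'I_n}|.+1)%:R P k0 (lexx _) _)).
  move=> E _; rewrite ltr_nat ltnS /arc_count; exact: max_card.
by rewrite mul0r expR0 oppr0 expR0 mulr1 subrK expr1n mul1r.
Qed.

End Helpers3.
Section Helpers4.
Variable R : realType.

Lemma prod_sum_ffun n K (f : nat -> R) :
  \sum_(y : {ffun 'I_n -> 'I_K}) \prod_(v < n) f (y v) = (\sum_(k < K) f k) ^+ n.
Proof.
rewrite -(bigA_distr_bigA (fun (_ : 'I_n) (j : 'I_K) => f j)) /=.
by rewrite prodr_const card_ord.
Qed.

Lemma qpartial_le1 (q : nat -> R) N :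
  (forall k, 0 <= q k) -> (\esum_(k in [set: nat]) (q k)%:E = 1%E) ->
  \sum_(k < N) q k <= 1.
Proof.
move=> q0 q1.
have : ((\sum_(0 <= k < N) (q k)%:E) <= \big[+%E/0%R]_(0 <= i <oo) (q i)%:E)%E.
  by apply: nneseries_lim_ge => k _ _; rewrite lee_fin.
rewrite nneseries_esumT ?q1 // sumEFin => h; have := h.
by rewrite lee_fin big_mkord.
Qed.

Lemma qsum_le (q : nat -> R) K t :
  (forall k, 0 <= q k) -> (\esum_(k in [set: nat]) (q k)%:E = 1%E) ->
  \sum_(k < K) q k + (if (K <= t)%N then q t else 0) <= 1.
Proof.
move=> q0 q1; case: leqP => Kt; last by rewrite addr0 qpartial_le1.
apply: le_trans (qpartial_le1 q t.+1 q0 q1).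
rewrite -!(big_mkord xpredT) (big_cat_nat (leq0n K) (leqW Kt)) /= lerD2l.
rewrite big_nat_recr //= lerDr; apply: sumr_ge0 => k _; exact: q0.
Qed.

Lemma type_tail (q : nat -> R) n K t (mu a : R) :
  (forall k, 0 <= q k) -> (\esum_(k in [set: nat]) (q k)%:E = 1%E) -> 0 <= mu ->
  \sum_(y : {ffun 'I_n -> 'I_K}) (\prod_(v < n) q (y v)) *
     (if (#|[set v | (y v : nat) == t]%SET|%:R < a) then 1 else 0)
  <= expR (mu * a - n%:R * (q t * (1 - expR (- mu)))).
Proof.
move=> q0 q1 mu0.
pose c (k : nat) : R := if k == t then expR (- mu) else 1.
apply: (@le_trans _ _ (\sum_(y : {ffun 'I_n -> 'I_K}) expR (mu * a) * \prod_(v < n) (q (y v) * c (y v)))).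
  apply: ler_sum => y _.
  have w0 : 0 <= \prod_(v < n) q (y v) by apply: prodr_ge0 => v _.
  case: ifP => Na; last first.
    by rewrite mulr0 mulr_ge0 ?expR_ge0 // prodr_ge0 // => v _; rewrite mulr_ge0 // /c; case: ifP; rewrite ?expR_ge0.
  rewrite mulr1 big_split /= mulrCA -[X in X <= _]mulr1; apply: ler_wpM2l => //.
  have -> : \prod_(v < n) c (y v) = expR (- mu) ^+ #|[set v | (y v : nat) == t]%SET|.
    rewrite -prodr_const [RHS]big_mkcond /=; apply: eq_bigr => v _; rewrite inE /c.
    by case: ifP.
  rewrite -expRM_natr -expRD -[X in X <= _]expR0 ler_expR mulNr -mulrBr.
  by apply: mulr_ge0 => //; rewrite subr_ge0 ltW.
rewrite -mulr_sumr.
rewrite (prod_sum_ffun n K (fun k => q k * c k)).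
set z := q t * (1 - expR (- mu)).
have z0 : 0 <= z by rewrite mulr_ge0 // subr_ge0 -expR0 ler_expR oppr_le0.
have base0 : 0 <= \sum_(k < K) q k * c k.
  by apply: sumr_ge0 => k _; rewrite mulr_ge0 // /c; case: ifP; rewrite ?expR_ge0.
have base1 : \sum_(k < K) q k * c k <= 1 - z.
  have := qsum_le q K t q0 q1.
  case: (ltnP t K) => tK.
    rewrite addr0 => hq.
    rewrite (bigD1 (Ordinal tK)) //= in hq.
    rewrite (bigD1 (Ordinal tK)) //= /c eqxx.
    rewrite (eq_bigr (fun k : 'I_K => q k)); last first.
      move=> k kt; case: ifP => [/eqP kt'|]; last by rewrite mulr1.
      by move: kt; rewrite -val_eqE /= kt' eqxx.
    rewrite /z; lra.
  move=> hq; rewrite (eq_bigr (fun k : 'I_K => q k)); last first.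
    move=> k _; rewrite /c; case: ifP => [/eqP kt|]; last by rewrite mulr1.
    by have := ltn_ord k; rewrite kt ltnNge tK.
  rewrite /z.
  have e0 : 0 <= expR (- mu) by exact: expR_ge0.
  have := q0 t; nra.
rewrite expRD; apply: ler_wpM2l; first exact: expR_ge0.
have hb : (1 - z) \is Num.nneg by rewrite nnegrE; exact: le_trans base1.
apply: (le_trans (lerXn2r n _ hb base1)); first by rewrite nnegrE.
have -> : - (n%:R * z) = (- z) * n%:R by ring.
rewrite expRM_natr; apply: lerXn2r => //; first by rewrite nnegrE expR_ge0.
exact: expR_ge1Dx.
Qed.

End Helpers4.
Section Helpers5.
Variable R : realType.

Definition phi n K (y : {ffun 'I_n -> 'I_K}) : {ffun 'I_n -> nat} := [ffun v => (y v : nat)].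
Arguments phi {n K}.

Lemma phi_inj n K : injective (@phi n K).
Proof.
move=> y1 y2 h; apply/ffunP => v; apply: val_inj.
by have := congr1 (fun f : {ffun 'I_n -> nat} => f v) h; rewrite !ffunE.
Qed.

Lemma esum_trunc n (a : {ffun 'I_n -> nat} -> R) (B : R) :
  (forall x, 0 <= a x) ->
  (forall K, \sum_(y : {ffun 'I_n -> 'I_K.+1}) a (phi y) <= B) ->
  (\esum_(x in [set: {ffun 'I_n -> nat}]) (a x)%:E <= B%:E)%E.
Proof.
move=> a0 hK; apply: ge_ereal_sup => _ [X [finX _] <-].
have finX' := finX; move/finite_fsetP: finX => [F XF].
pose K := \max_(x <- finmap.enum_fset F) \max_(v < n) x v.
have inr : X `<=` (@phi n K.+1) @` setT.
  move=> x; rewrite XF => xF; exists [ffun v => inord (x v)] => //.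
  apply/ffunP => v; rewrite !ffunE inordK // ltnS.
  apply: (leq_trans (@leq_bigmax _ (fun i : 'I_n => x i) v)).
  exact: (@leq_bigmax_seq _ _ xpredT (fun f : {ffun 'I_n -> nat} => \max_(v < n) f v) x xF).
apply: (@le_trans _ _ (\sum_(x \in (@phi n K.+1) @` setT) (a x)%:E)%R).
  apply: lee_fsum_nneg_subset => //.
  - by apply: finite_image; exact: finite_finset.
  - by move=> x; rewrite !inE => /inr.
  - by move=> x _; rewrite lee_fin.
rewrite fsbig_image; last by move=> y1 y2 _ _; apply: phi_inj.
rewrite (fsbigE (enum {ffun 'I_n -> 'I_K.+1})) ?enum_uniq //; last by move=> i _; rewrite mem_enum.
under eq_bigl do rewrite in_setT.
rewrite sumEFin lee_fin enumT; exact: hK.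
Qed.

End Helpers5.
Section Helpers6.
Variable R : realType.

Lemma powR_sq (x e : R) : 0 < x -> (x `^ e) ^+ 2 = x `^ (e * 2).
Proof.
move=> x0; rewrite expr2 -powRD; last by rewrite (gt_eqF x0) implybT.
by congr (_ `^ _); ring.
Qed.

Lemma ln_sq_le (x e : R) : 1 <= x -> 0 < e ->
  (ln x) ^+ 2 <= (4 / e) ^+ 2 * x `^ (e / 2).
Proof.
move=> x1 e0; have x0 : 0 < x by apply: lt_le_trans x1.
have l0 : 0 <= ln x by exact: ln_ge0.
have h : ln x <= (4 / e) * x `^ (e / 4).
  have := ln_sublinear (powR_gt0 (e / 4) x0); rewrite ln_powR => h.
  have -> : ln x = (4 / e) * ((e / 4) * ln x) by field; rewrite gt_eqF.
  by rewrite ler_pM2l ?ltW // divr_gt0.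
have -> : x `^ (e / 2) = (x `^ (e / 4)) ^+ 2 by rewrite powR_sq //; congr (_ `^ _); field.
rewrite -exprMn; apply: lerXn2r => //; rewrite nnegrE //.
by apply: mulr_ge0; [rewrite divr_ge0 // ltW | exact: powR_ge0].
Qed.

Lemma eventually_big (c e K : R) : 0 < c -> 0 < e ->
  exists N : nat, forall n : nat, (N <= n)%N ->
    (ln (n%:R : R)) ^+ 2 + K <= c * (n%:R : R) `^ e.
Proof.
move=> c0 e0.
set A := (4 / e) ^+ 2.
have A0 : 0 <= A by rewrite /A exprn_ge0 // divr_ge0 // ltW.
set Y := (A + `|K|) / c + 1.
have Y1 : 1 <= Y by rewrite /Y lerDr divr_ge0 // ?addr_ge0 // ltW.
exists (Num.trunc (Y `^ (2 / e))).+1 => n hn.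
have hX : Y `^ (2 / e) < n%:R.
  rewrite -truncn_lt_nat; [exact: hn | exact: powR_ge0].
have n1 : 1 <= (n%:R : R).
  apply: le_trans (ltW hX); rewrite -[X in X <= _](powRr0 Y); apply: ler_powR => //.
  by apply: divr_ge0 => //; apply: ltW.
have n0 : 0 < (n%:R : R) by apply: lt_le_trans n1.
set y := (n%:R : R) `^ (e / 2).
have yY : Y <= y.
  have -> : Y = (Y `^ (2 / e)) `^ (e / 2).
    by rewrite -powRrM (_ : 2 / e * (e / 2) = 1) ?powRr1 //; [apply: le_trans Y1 | field; rewrite gt_eqF].
  apply: ge0_ler_powR; rewrite ?nnegrE ?powR_ge0 ?ltW //.
  by rewrite divr_gt0.
have -> : (n%:R : R) `^ e = y ^+ 2 by rewrite powR_sq //; congr (_ `^ _); field.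
apply: (@le_trans _ _ (A * y + K)); first exact: (lerD (ln_sq_le _ _ n1 e0) (lexx K)).
have hK : K <= `|K| by exact: ler_norm.
have hcY : c * Y = A + `|K| + c by rewrite /Y; field; rewrite gt_eqF.
have y1 : 1 <= y by apply: le_trans Y1 yY.
have : c * Y * y <= c * y * y by rewrite -mulrA -(mulrA c y) ler_pM2l // ler_pM2r // (lt_le_trans ltr01 y1).
rewrite hcY; have := normr_ge0 K; nra.
Qed.

End Helpers6.
Arguments Ncnt {n}.
Arguments mtch {n}.
Arguments phi {n K}.
Section Helpers7.
Variable R : realType.

Lemma expN_le (mu : R) : 0 <= mu -> expR (- mu) <= 1 - mu + mu ^+ 2.
Proof.
move=> mu0; set X := expR (- mu).
have X0 : 0 < X by exact: expR_gt0.
have h1 : X * expR mu = 1 by rewrite /X -expRD addNr expR0.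
have h2 := expR_ge1Dx mu.
have h3 : X * (1 + mu) <= 1 by rewrite -[X in _ <= X]h1 ler_pM2l.
have h4 : 0 <= mu ^+ 3 by rewrite exprn_ge0.
rewrite -(@ler_pM2r _ (1 + mu)); last by rewrite ltr_wpDr.
apply: (le_trans h3); nra.
Qed.

Lemma one_sub_expN (mu : R) : 0 <= mu -> mu - mu ^+ 2 <= 1 - expR (- mu).
Proof. by move=> /expN_le h; lra. Qed.

Lemma per_x_bound (q : nat -> R) (kn : nat -> nat -> R) n t s
   (x : {ffun 'I_n -> nat}) (Pe : pred {set 'I_n * 'I_n}) (Lr a b lam : R) :
  (forall a b, 0 <= kn a b) ->
  (forall E, Pe E -> (arc_count x E t s)%:R < Lr) ->
  0 <= a -> 1 <= b -> 0 <= lam <= 1 ->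
  \sum_(E | Pe E) graph_weight kn x E <=
    (if (Ncnt x t)%:R < a then 1 else 0) + (if (Ncnt x s)%:R < b then 1 else 0) +
    expR (lam * Lr - arc_prob kn n t s * (lam - lam ^+ 2) * (a * (b - 1))).
Proof.
move=> k0 hA a0 b1 /andP[l0 l1].
have S1 := @gsum_le1 R kn n x Pe k0.
have eg := expR_ge0 (lam * Lr - arc_prob kn n t s * (lam - lam ^+ 2) * (a * (b - 1))).
case: ifP => ha.
  by apply: (le_trans S1); case: ifP => _; lra.
case: ifP => hb.
  by apply: (le_trans S1); lra.
rewrite add0r.
move/negbT: ha; rewrite -leNgt => ha; move/negbT: hb; rewrite -leNgt => hb.
apply: (le_trans (@edge_bound R kn n x t s lam Lr Pe k0 l0 hA)).
have /andP[p0 p1] := @arc_prob01 R kn n t s k0.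
set p := arc_prob kn n t s in p0 p1 eg *.
set M := #|[set e in offdiag n | mtch x t s e]%SET|.
have hM : (Ncnt x t)%:R * ((Ncnt x s)%:R - 1) <= (M%:R : R).
  have := @M_lb n x t s; rewrite -(ler_nat R) natrD natrM -/M => h; lra.
have e0 := expR_ge0 (- lam).
have beta0 : 0 <= 1 - p + p * expR (- lam) by have := mulr_ge0 p0 e0; lra.
have betale : 1 - p + p * expR (- lam) <= expR (- (p * (1 - expR (- lam)))).
  by have := expR_ge1Dx (- (p * (1 - expR (- lam)))); lra.
rewrite add0r expRD ler_pM2l ?expR_gt0 //.
apply: (le_trans (lerXn2r M _ _ betale)); rewrite ?nnegrE ?expR_ge0 //.
rewrite -expRM_natr ler_expR.
have hl := one_sub_expN lam l0.
have h2 : 0 <= lam - lam ^+ 2 by nra.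
have hab : a * (b - 1) <= (M%:R : R).
  apply: le_trans hM; apply: ler_pM => //; lra.
have hp : 0 <= p * (lam - lam ^+ 2) by exact: mulr_ge0.
have hM0 : 0 <= (M%:R : R) by [].
have ab0 : 0 <= a * (b - 1) by apply: mulr_ge0 => //; lra.
have s1 : p * (lam - lam ^+ 2) * (a * (b - 1)) <= p * (lam - lam ^+ 2) * M%:R by exact: ler_wpM2l.
have s2 : p * (lam - lam ^+ 2) * M%:R <= p * (1 - expR (- lam)) * M%:R.
  by apply: ler_wpM2r => //; apply: ler_wpM2l.
lra.
Qed.

End Helpers7.
Section Helpers8.
Variable R : realType.

Lemma Ncnt_phi n K (y : {ffun 'I_n -> 'I_K}) t :
  Ncnt (phi y) t = #|[set v | (y v : nat) == t]%SET|.
Proof. by apply: eq_card => v; rewrite !inE ffunE. Qed.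

Lemma tail_exp (q : nat -> R) n K t (mu a : R) :
  (forall k, 0 <= q k) -> (\esum_(k in [set: nat]) (q k)%:E = 1%E) -> 0 <= mu ->
  \sum_(y : {ffun 'I_n -> 'I_K}) (\prod_(v < n) q (y v)) *
     (if (Ncnt (phi y) t)%:R < a then 1 else 0)
  <= expR (mu * a - n%:R * q t * (mu - mu ^+ 2)).
Proof.
move=> q0 q1 mu0.
under eq_bigr do rewrite Ncnt_phi.
apply: (le_trans (@type_tail R q n K t mu a q0 q1 mu0)).
rewrite ler_expR lerD2l lerN2 -mulrA ler_wpM2l //.
by rewrite ler_wpM2l // one_sub_expN.
Qed.

Lemma core_bound (q : nat -> R) (kn : nat -> nat -> R) n t s
  (Pev : {ffun 'I_n -> nat} -> {set 'I_n * 'I_n} -> bool) (Lr a b lam mu1 mu2 : R) :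
  (forall k, 0 <= q k) -> (\esum_(k in [set: nat]) (q k)%:E = 1%E) ->
  (forall a b, 0 <= kn a b) ->
  (forall x E, Pev x E -> (arc_count x E t s)%:R < Lr) ->
  0 <= a -> 1 <= b -> 0 <= lam <= 1 -> 0 <= mu1 -> 0 <= mu2 ->
  (IRD_prob q kn Pev <=
   (expR (mu1 * a - n%:R * q t * (mu1 - mu1 ^+ 2)) +
    expR (mu2 * b - n%:R * q s * (mu2 - mu2 ^+ 2)) +
    expR (lam * Lr - arc_prob kn n t s * (lam - lam ^+ 2) * (a * (b - 1))))%:E)%E.
Proof.
move=> q0 q1 k0 hA a0 b1 hl m1 m2.
rewrite /IRD_prob; apply: esum_trunc.
  move=> x; apply: mulr_ge0; first by apply: prodr_ge0.
  by apply: sumr_ge0 => E _; exact: graph_weight_ge0.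
move=> K.
set e3 := expR (lam * Lr - _).
apply: (@le_trans _ _ (\sum_(y : {ffun 'I_n -> 'I_K.+1}) (\prod_(v < n) q (y v)) *
   ((if (Ncnt (phi y) t)%:R < a then 1 else 0) + (if (Ncnt (phi y) s)%:R < b then 1 else 0) + e3))).
  apply: ler_sum => y _.
  have -> : \prod_(v < n) q (phi y v) = \prod_(v < n) q (y v).
    by apply: eq_bigr => v _; rewrite ffunE.
  apply: ler_wpM2l; first by apply: prodr_ge0.
  by apply: per_x_bound => // E; apply: hA.
rewrite (eq_bigr (fun y : {ffun 'I_n -> 'I_K.+1} =>
   (\prod_(v < n) q (y v)) * (if (Ncnt (phi y) t)%:R < a then 1 else 0) +
   (\prod_(v < n) q (y v)) * (if (Ncnt (phi y) s)%:R < b then 1 else 0) +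
   e3 * (\prod_(v < n) q (y v)))); last by move=> y _; ring.
rewrite !big_split /= -mulr_sumr.
apply: lerD; first apply: lerD.
- exact: tail_exp.
- exact: tail_exp.
- rewrite -[X in _ <= X]mulr1; apply: ler_wpM2l; first exact: expR_ge0.
  rewrite (@prod_sum_ffun R n K.+1 q); apply: exprn_ile1.
    by apply: sumr_ge0 => k _.
  exact: qpartial_le1.
Qed.

End Helpers8.
Section Helpers9.
Variable R : realType.

Lemma ab_lb (nR qt qs d : R) : 0 < nR -> 0 < qt -> 0 < qs -> 0 <= d ->
  1 <= nR * qs * d ->
  nR * nR * (qt * qs) * (1 - 3 * d) <= (nR * qt * (1 - d)) * (nR * qs * (1 - d) - 1).
Proof.
move=> n0 qt0 qs0 d0 h.
set X := nR * qt; set Y := nR * qs.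
have X0 : 0 < X by rewrite mulr_gt0.
have h1 : 0 <= X * (Y * d - 1) by apply: mulr_ge0; [exact: ltW | rewrite subr_ge0].
have Y0 : 0 < Y by rewrite mulr_gt0.
have h2 : 0 <= X * Y * d ^+ 2 by apply: mulr_ge0; [apply: mulr_ge0; exact: ltW | exact: exprn_ge0].
have h3 : 0 <= X * d by apply: mulr_ge0 => //; exact: ltW.
have E : X * (1 - d) * (Y * (1 - d) - 1) - nR * nR * (qt * qs) * (1 - 3 * d) =
         X * (Y * d - 1) + X * Y * d ^+ 2 + X * d by rewrite /X /Y; ring.
rewrite -subr_ge0 E; lra.
Qed.

Lemma lam_opt (m Lr D : R) : 0 < D -> 0 <= Lr -> D <= m - Lr ->
  0 <= (m - Lr) / (2 * m) <= 1 /\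
  (m - Lr) / (2 * m) * Lr - ((m - Lr) / (2 * m) - ((m - Lr) / (2 * m)) ^+ 2) * m
     <= - (D ^+ 2 / (4 * (Lr + D))).
Proof.
move=> D0 L0 hD.
have m0 : 0 < m by lra.
have y0 : 0 < m - Lr by lra.
split.
  apply/andP; split; first by rewrite divr_ge0 // ltW // mulr_gt0.
  by rewrite ler_pdivrMr ?mulr_gt0 //; lra.
have -> : (m - Lr) / (2 * m) * Lr - ((m - Lr) / (2 * m) - ((m - Lr) / (2 * m)) ^+ 2) * m
   = - ((m - Lr) ^+ 2 / (4 * m)) by field; rewrite gt_eqF.
rewrite lerN2.
have LD : 0 < 4 * (Lr + D) by lra.
rewrite ler_pdivrMr // mulrAC ler_pdivlMr ?mulr_gt0 //.
set y := m - Lr.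
have -> : m = Lr + y by rewrite /y; ring.
have hy : D <= y by [].
have e1 : 0 <= Lr * (y ^+ 2 - D ^+ 2).
  apply: mulr_ge0 => //; rewrite subr_ge0; apply: lerXn2r => //; rewrite nnegrE; lra.
have e2 : 0 <= D * y * (y - D).
  apply: mulr_ge0; [apply: mulr_ge0; lra | lra].
have E : y ^+ 2 * (4 * (Lr + D)) - D ^+ 2 * (4 * (Lr + y)) = 4 * (Lr * (y ^+ 2 - D ^+ 2) + D * y * (y - D)) by ring.
rewrite -subr_ge0 E; lra.
Qed.

End Helpers9.
Section Helpers10.
Variable R : realType.

Lemma edge_gap (nR qt qs kap g p : R) : 0 < nR -> 0 < qt -> 0 < qs -> 0 < kap ->
  0 < g -> g <= kap -> 1 <= nR * qs * (g / (8 * kap)) -> 0 <= p -> kap + g <= p * nR ->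
  nR * (qt * qs) * g / 4 <=
  p * ((nR * qt * (1 - g / (8 * kap))) * (nR * qs * (1 - g / (8 * kap)) - 1))
   - nR * qt * qs * kap.
Proof.
move=> n0 qt0 qs0 k0 g0 gk hd p0 hp.
set d := g / (8 * kap).
have d0 : 0 <= d by rewrite /d divr_ge0 ?ltW // mulr_gt0.
have dk : d * (kap + g) <= g / 4.
  have -> : g / 4 = d * (2 * kap) by rewrite /d; field; rewrite gt_eqF.
  by apply: ler_wpM2l => //; lra.
have d8 : d <= 1 / 8.
  rewrite /d ler_pdivrMr ?mulr_gt0 //; lra.
have hab := @ab_lb R nR qt qs d n0 qt0 qs0 d0 hd.
set ab := (nR * qt * (1 - d)) * (nR * qs * (1 - d) - 1) in hab *.
set Pq := qt * qs in hab *.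
have Pq0 : 0 < Pq by rewrite mulr_gt0.
have W0 : 0 <= nR * Pq * (1 - 3 * d) by apply: mulr_ge0; [apply: mulr_ge0; lra | lra].
have s1 : p * (nR * nR * Pq * (1 - 3 * d)) <= p * ab by exact: ler_wpM2l.
have s2 : (kap + g) * (nR * Pq * (1 - 3 * d)) <= (p * nR) * (nR * Pq * (1 - 3 * d)).
  exact: ler_wpM2r.
have E1 : (p * nR) * (nR * Pq * (1 - 3 * d)) = p * (nR * nR * Pq * (1 - 3 * d)) by ring.
have s3 : nR * Pq * (d * (kap + g)) <= nR * Pq * (g / 4).
  apply: ler_wpM2l => //; apply: mulr_ge0; lra.
have E2 : nR * qt * qs * kap = nR * Pq * kap by rewrite /Pq; ring.
rewrite E2.
have E3 : (kap + g) * (nR * Pq * (1 - 3 * d)) - nR * Pq * kap =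
   nR * Pq * g - 3 * (nR * Pq * (d * (kap + g))) by ring.
have E4 : nR * Pq * g / 4 = nR * Pq * g - 3 * (nR * Pq * (g / 4)) by field.
lra.
Qed.

End Helpers10.
Section Helpers11.
Variable R : realType.

Lemma powR_addE (x a b : R) : 0 < x -> x `^ a * x `^ b = x `^ (a + b).
Proof. by move=> x0; rewrite powRD // (gt_eqF x0) implybT. Qed.

Lemma event_lt n (x : {ffun 'I_n -> nat}) E t s (y : R) :
  ((@arc_count n x E t s)%:Z < Num.floor y)%R -> (arc_count x E t s)%:R < y.
Proof.
move=> h; apply: (lt_le_trans _ (floor_le y)).
have -> : ((arc_count x E t s)%:R : R) = ((arc_count x E t s)%:Z)%:~R by [].
by rewrite ltr_int.
Qed.

Lemma final_comb (l E1 E2 E3 : R) :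
  E1 <= - (l / 2) - 1 -> E2 <= - (l / 2) - 1 -> E3 <= - (l / 2) - 1 ->
  expR E1 + expR E2 + expR E3 <= 2 * expR (- l / 2).
Proof.
move=> h1 h2 h3.
have e1 : expR (- (l / 2) - 1) = expR (- l / 2) * expR (- 1 : R) by rewrite -expRD mulNr.
have hE : expR (- 1 : R) <= 1 / 2.
  have h0 := expR_ge1Dx (1 : R); have X0 := expR_gt0 (- 1 : R).
  have inv : expR (- 1 : R) * expR (1 : R) = 1 by rewrite -expRD addNr expR0.
  have : expR (- 1 : R) * 2 <= expR (- 1 : R) * expR (1 : R) by rewrite ler_pM2l //; lra.
  lra.
have p1 : expR E1 <= expR (- l / 2) * expR (- 1 : R) by rewrite -e1 ler_expR.
have p2 : expR E2 <= expR (- l / 2) * expR (- 1 : R) by rewrite -e1 ler_expR.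
have p3 : expR E3 <= expR (- l / 2) * expR (- 1 : R) by rewrite -e1 ler_expR.
have q0 := expR_gt0 (- l / 2).
have : expR (- l / 2) * expR (- 1 : R) <= expR (- l / 2) * (1 / 2) by rewrite ler_pM2l.
lra.
Qed.

End Helpers11.
Theorem lemma3 (R : realType) (q : nat -> R) (delta tau : R)
    (kappa : nat -> nat -> R) (kn : nat -> nat -> nat -> R) (t s : nat)
    (alpha C : R) :
  (forall k, 0 <= q k) ->
  (\esum_(k in [set: nat]) (q k)%:E = 1%E) ->
  0 < delta ->
  (\esum_(k in [set: nat]) (q k * k%:R `^ delta)%:E < +oo)%E ->
  0 < tau < 1 ->
  (forall a b, 0 <= kappa a b) ->
  (forall n a b, 0 <= kn n a b) ->
  1 / 2 - tau / 2 < alpha < 1 / 2 ->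
  0 < C ->
  (forall n : nat, (0 < n)%N ->
     kappa t s + C * n%:R `^ (- (1 / 2) + alpha) / Num.sqrt (q t * q s)
       <= kn n t s) ->
  exists N : nat, forall n : nat, (N <= n)%N ->
    stable q tau n t -> stable q tau n s ->
    (IRD_prob q (kn n) (fun x E =>
        ((@arc_count n x E t s)%:Z < Num.floor (n%:R * q t * q s * kappa t s))%R)
     <= (2 * expR (- ((ln (n%:R : R)) ^+ 2) / 2))%:E)%E.
Proof.
move=> q0 q1 _ _ /andP[tau0 tau1] kap0 kn0 /andP[al1 al2] C0 hkn.
have al0 : 0 < alpha by lra.
have prod0 : 0 <= q t * q s * kappa t s by rewrite !mulr_ge0.
move: prod0; rewrite le_eqVlt => /orP[/eqP hz|hpos].
  exists 0%N => n _ _ _.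
  have -> : IRD_prob q (kn n) (fun x E =>
        ((@arc_count n x E t s)%:Z < Num.floor (n%:R * q t * q s * kappa t s))%R) = 0%E.
    rewrite /IRD_prob esum1 // => x _.
    rewrite [X in (_ * X)%:E]big_pred0; first by rewrite mulr0.
    move=> E /=.
    have -> : (n%:R : R) * q t * q s * kappa t s = n%:R * (q t * q s * kappa t s) by ring.
    by rewrite -hz mulr0 floor0.
  by rewrite lee_fin mulr_ge0 ?expR_ge0.
have qt0 : 0 < q t.
  rewrite lt_neqAle q0 andbT; apply/eqP => h; move: hpos; by rewrite -h !mul0r ltxx.
have qs0 : 0 < q s.
  rewrite lt_neqAle q0 andbT; apply/eqP => h; move: hpos; by rewrite -h mulr0 mul0r ltxx.
have k0 : 0 < kappa t s.
  rewrite lt_neqAle kap0 andbT; apply/eqP => h; move: hpos; by rewrite -h mulr0 ltxx.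
set kap := kappa t s in hkn hpos k0 *.
set Pq := q t * q s in hkn hpos *.
have Pq0 : 0 < Pq by rewrite mulr_gt0.
have sq0 : 0 < Num.sqrt Pq by rewrite sqrtr_gt0.
set Cs := C / Num.sqrt Pq.
have Cs0 : 0 < Cs by rewrite divr_gt0.
have e1 : 0 < 1 / 2 - alpha by lra.
have e2 : 0 < alpha + 1 / 2 by lra.
have e4 : 0 < 2 * alpha by lra.
have c2' : 0 < q s * Cs by rewrite mulr_gt0.
have [N1 h1] := @eventually_big R 1 (1 / 2 - alpha) (Cs / kap) ltr01 e1.
have [N2 h2] := @eventually_big R (q s * Cs) (alpha + 1 / 2) (8 * kap) c2' e2.
have [N3 h3] := @eventually_big R 1 1 (2 * kap) ltr01 ltr01.
have c4 : 0 < q t * Cs ^+ 2 / (128 * kap ^+ 2).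
  by apply: divr_gt0; apply: mulr_gt0 => //; try lra; exact: exprn_gt0.
have c5 : 0 < q s * Cs ^+ 2 / (128 * kap ^+ 2).
  by apply: divr_gt0; apply: mulr_gt0 => //; try lra; exact: exprn_gt0.
have c6 : 0 < Pq * Cs ^+ 2 / (64 * kap).
  by apply: divr_gt0; apply: mulr_gt0 => //; try lra; exact: exprn_gt0.
have [N4 h4] := @eventually_big R _ (2 * alpha) 2 c4 e4.
have [N5 h5] := @eventually_big R _ (2 * alpha) 2 c5 e4.
have [N6 h6] := @eventually_big R _ (2 * alpha) 2 c6 e4.
exists (N1 + N2 + N3 + N4 + N5 + N6).+1 => n hn _ _.
have {h1}h1 := h1 n ltac:(clear -hn; lia).
have {h2}h2 := h2 n ltac:(clear -hn; lia).
have {h3}h3 := h3 n ltac:(clear -hn; lia).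
have {h4}h4 := h4 n ltac:(clear -hn; lia).
have {h5}h5 := h5 n ltac:(clear -hn; lia).
have {h6}h6 := h6 n ltac:(clear -hn; lia).
have npos : (0 < n)%N by clear -hn; lia.
have {hkn}hkn := hkn n npos.
set nR := (n%:R : R) in h1 h2 h3 h4 h5 h6 hkn *.
have n0 : 0 < nR by rewrite /nR ltr0n.
set l := ln nR ^+ 2 in h1 h2 h3 h4 h5 h6 *.
have l0 : 0 <= l by rewrite /l exprn_ge0 // ln_ge0 // /nR ler1n.
set u := nR `^ (- (1 / 2) + alpha) in hkn.
have u0 : 0 < u by rewrite powR_gt0.
set g := C * u / Num.sqrt Pq in hkn.
have gE : g = Cs * u by rewrite /g /Cs; field; rewrite gt_eqF.
have g0 : 0 < g by rewrite gE mulr_gt0.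
have F1 : u * nR `^ (1 / 2 - alpha) = 1.
  by rewrite /u powR_addE // (_ : - (1 / 2) + alpha + (1 / 2 - alpha) = 0) ?powRr0 //; ring.
have F2 : nR * u = nR `^ (alpha + 1 / 2).
  have -> : alpha + 1 / 2 = 1 + (- (1 / 2) + alpha) by lra.
  by rewrite -powR_addE // powRr1 // ltW.
have F3 : nR * u ^+ 2 = nR `^ (2 * alpha).
  rewrite expr2 mulrA F2 /u powR_addE //; congr (_ `^ _); lra.
have c1 : g <= kap.
  have hw : Cs / kap <= nR `^ (1 / 2 - alpha) by lra.
  have : Cs / kap * u <= nR `^ (1 / 2 - alpha) * u by rewrite ler_pM2r.
  rewrite [nR `^ _ * u]mulrC F1 => h.
  have -> : g = (Cs / kap * u) * kap by rewrite gE; field; rewrite gt_eqF.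
  by rewrite -[X in _ <= X]mul1r ler_pM2r.
set d := g / (8 * kap).
have d0 : 0 <= d by rewrite /d divr_ge0 ?ltW // mulr_gt0.
have d8 : d <= 1 / 8 by rewrite /d ler_pdivrMr ?mulr_gt0 //; lra.
have c2 : 1 <= nR * q s * d.
  have -> : nR * q s * d = q s * Cs * (nR * u) / (8 * kap).
    by rewrite /d gE; field; rewrite gt_eqF.
  rewrite F2 ler_pdivlMr ?mulr_gt0 //; lra.
have c3 : 2 * kap <= nR.
  by move: h3; rewrite powRr1; [lra | exact: ltW].
set p := arc_prob (kn n) n t s.
have p0 : 0 <= p by have /andP[] := @arc_prob01 R (kn n) n t s (kn0 n).
have hp : kap + g <= p * nR.
  rewrite -ler_pdivrMr // /p /arc_prob le_min; apply/andP; split.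
    by rewrite ler_pM2r ?invr_gt0.
  by rewrite ler_pdivrMr //; lra.
set a := nR * q t * (1 - d).
set b := nR * q s * (1 - d).
have a0 : 0 <= a by rewrite /a; apply: mulr_ge0; [apply: mulr_ge0; exact: ltW | lra].
have b1 : 1 <= b.
  have : nR * q s * d <= nR * q s * (1 - d) by rewrite ler_pM2l ?mulr_gt0 //; lra.
  rewrite /b; lra.
set Lr := nR * q t * q s * kap.
have Lr0 : 0 <= Lr by rewrite /Lr !mulr_ge0 // ltW.
set m := p * (a * (b - 1)).
set D := nR * Pq * g / 4.
have D0 : 0 < D by rewrite /D; apply: divr_gt0; [apply: mulr_gt0 => //; exact: mulr_gt0 | lra].
have gap : D <= m - Lr.
  exact: (@edge_gap R nR (q t) (q s) kap g p n0 qt0 qs0 k0 g0 c1 c2 p0 hp).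
have [lam01 hlam] := @lam_opt R m Lr D D0 Lr0 gap.
apply: le_trans.
  apply: (@core_bound R q (kn n) n t s _ Lr a b ((m - Lr) / (2 * m)) (d / 2) (d / 2) q0 q1 (kn0 n) _ a0 b1 lam01 _ _).
  - by move=> x E; apply: event_lt.
  - by rewrite divr_ge0.
  - by rewrite divr_ge0.
rewrite lee_fin; apply: final_comb.
- have -> : d / 2 * a - nR * q t * (d / 2 - (d / 2) ^+ 2) = - (nR * q t * d ^+ 2 / 4).
    by rewrite /a; field.
  have -> : nR * q t * d ^+ 2 / 4 = (q t * Cs ^+ 2 / (128 * kap ^+ 2)) * (nR * u ^+ 2) / 2.
    by rewrite /d gE; field; rewrite gt_eqF.
  rewrite F3; lra.
- have -> : d / 2 * b - nR * q s * (d / 2 - (d / 2) ^+ 2) = - (nR * q s * d ^+ 2 / 4).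
    by rewrite /b; field.
  have -> : nR * q s * d ^+ 2 / 4 = (q s * Cs ^+ 2 / (128 * kap ^+ 2)) * (nR * u ^+ 2) / 2.
    by rewrite /d gE; field; rewrite gt_eqF.
  rewrite F3; lra.
- have E3 : (m - Lr) / (2 * m) * Lr - p * ((m - Lr) / (2 * m) - ((m - Lr) / (2 * m)) ^+ 2) * (a * (b - 1))
     = (m - Lr) / (2 * m) * Lr - ((m - Lr) / (2 * m) - ((m - Lr) / (2 * m)) ^+ 2) * m.
    by rewrite /m; ring.
  rewrite E3; apply: (le_trans hlam).
  have LD : Lr + D <= 2 * (nR * Pq * kap).
    rewrite /Lr /D /Pq.
    have : nR * (q t * q s) * g <= nR * (q t * q s) * kap by rewrite ler_pM2l ?mulr_gt0.
    have -> : nR * q t * q s * kap = nR * (q t * q s) * kap by ring.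
    have : 0 <= nR * (q t * q s) * kap.
      by apply: mulr_ge0; [apply: mulr_ge0; [exact: ltW | exact: ltW] | exact: ltW].
    lra.
  have LD0 : 0 < Lr + D by lra.
  have : D ^+ 2 / (4 * (2 * (nR * Pq * kap))) <= D ^+ 2 / (4 * (Lr + D)).
    rewrite ler_pdivrMr ?mulr_gt0 // mulrAC ler_pdivlMr ?mulr_gt0 //.
    rewrite ler_pM2l ?exprn_gt0 //; lra.
  have -> : D ^+ 2 / (4 * (2 * (nR * Pq * kap))) = (Pq * Cs ^+ 2 / (64 * kap)) * (nR * u ^+ 2) / 2.
    by rewrite /D gE; field; rewrite !gt_eqF.
  rewrite F3; lra.
Qed.
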